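(* Let $G^c$ be a connected vertex-coloured graph with $n$ vertices, $c$ colours and minimum degree $\delta$. Then either $\gamma^t(G^c)=c$ or $$\gamma^t(G^c)<\frac{1+\ln(\delta+1)}{\delta+1}(n-c+1)+c-1.$$
   Context: A vertex-coloured graph $G^c$ with colour set $\{1,\dots,c\}$ is a finite simple graph in which every vertex receives exactly one colour and every colour appears on at least one vertex. A dominating set is tropical if every colour appears on at least one of its vertices; $\gamma^t(G^c)$ is the minimum size of a tropical dominating set. *)

(* Defs.v *)
From mathcomp Require Import all_boot.
From Stdlib Require Import Reals.
Set Implicit Arguments. Unset Strict Implicit. Unset Printing Implicit Defensive.

Definition simple_graph (T : finType) (e : rel T) : Prop :=
  symmetric e /\ irreflexive e.

Definition graph_connected (T : finType) (e : rel T) : Prop :=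
  forall x y : T, connect e x y.

Definition degree (T : finType) (e : rel T) (v : T) : nat := #|[set u | e v u]|.

Definition is_min_degree (T : finType) (e : rel T) (delta : nat) : Prop :=
  (exists v : T, degree e v = delta) /\ (forall v : T, delta <= degree e v).

Definition colouring_onto (T : finType) (c : nat) (col : T -> 'I_c) : Prop :=
  forall i : 'I_c, exists v : T, col v = i.

Definition dominating (T : finType) (e : rel T) (D : {set T}) : bool :=
  [forall v, (v \in D) || [exists u in D, e u v]].

Definition tropical (T : finType) (c : nat) (col : T -> 'I_c) (D : {set T}) : bool :=
  [forall i : 'I_c, [exists v in D, col v == i]].

Definition trop_dom (T : finType) (e : rel T) (c : nat) (col : T -> 'I_c)
  (D : {set T}) : bool := dominating e D && tropical col D.

(* minimum size of a tropical dominating set (the whole vertex set is one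
   whenever col is onto, so #|T| is a harmless default) *)
Definition gamma_t (T : finType) (e : rel T) (c : nat) (col : T -> 'I_c) : nat :=
  \big[minn/#|T|]_(D : {set T} | trop_dom e col D) #|D|.

(* Main.v *)
Require Import Defs.
From mathcomp Require Import all_boot all_order all_algebra zify.
From mathcomp Require Import Rstruct.
From Stdlib Require Import Reals Lra Lia.
Set Implicit Arguments. Unset Strict Implicit. Unset Printing Implicit Defensive.
Import GRing.Theory Num.Theory Order.TTheory.

Section RingPart.
Local Open Scope ring_scope.
Section Avg.
Variable T : finType.

Lemma prod_ind (I : finType) (g : I -> bool) :
  \prod_i ((g i)%:R : R) = ([forall i, g i])%:R.
Proof.
case: (boolP [forall i, g i]) => [/forallP H|/forallPn [i Hi]].
  by rewrite big1 // => i _; rewrite H.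
by rewrite (bigD1 i) //= (negbTE Hi) mul0r.
Qed.

Lemma distr_ind (q : T -> bool -> R) (P : T -> bool -> bool) :
  \sum_(f : {ffun T -> bool}) (\prod_v q v (f v)) * ([forall v, P v (f v)])%:R
  = \prod_v (q v true * (P v true)%:R + q v false * (P v false)%:R).
Proof.
rewrite -(eq_bigr _ (fun v _ => big_bool _ (fun b => q v b * (P v b)%:R))).
rewrite bigA_distr_bigA /=; apply: eq_bigr => f _.
by rewrite big_split /= prod_ind.
Qed.

Variables (W : {set T}) (p : R).
Definition qW (v : T) (b : bool) : R :=
  if v \in W then (if b then p else 1 - p) else (if b then 0 else 1).
Definition wt (f : {ffun T -> bool}) : R := \prod_v qW v (f v).

Lemma qW_sum v : qW v true + qW v false = 1.
Proof. by rewrite /qW; case: (v \in W); [rewrite addrC subrK | rewrite add0r]. Qed.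

Lemma wt_ge0 f : 0 <= p <= 1 -> 0 <= wt f.
Proof.
move=> /andP [p0 p1]; apply: prodr_ge0 => v _; rewrite /qW.
by case: (v \in W); case: (f v) => //; rewrite subr_ge0.
Qed.

Lemma wt_sum : \sum_f wt f = 1.
Proof.
have := distr_ind qW (fun _ _ => true).
rewrite (eq_bigr (fun f => wt f)); last first.
  move=> f _; rewrite (_ : [forall v : T, true] = true) ?mulr1 //; exact/forallP.
move=> ->; rewrite big1 // => v _; by rewrite !mulr1 qW_sum.
Qed.

Lemma wt_E1 v0 : \sum_f wt f * (f v0)%:R = (v0 \in W)%:R * p.
Proof.
have := distr_ind qW (fun v b => (v == v0) ==> b).
rewrite (eq_bigr (fun f => wt f * (f v0)%:R)); last first.
  move=> f _; suff -> : [forall v, (v == v0) ==> f v] = f v0 by [].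
  apply/idP/idP => [/forallP H|H].
    by have := H v0; rewrite eqxx.
  by apply/forallP => v; apply/implyP => /eqP ->.
move=> ->; rewrite (bigD1 v0) //= eqxx mulr1 mulr0 addr0 big1 ?mulr1.
  by rewrite /qW; case: (v0 \in W); rewrite ?mul1r ?mul0r.
by move=> v /negbTE ->; rewrite !mulr1 qW_sum.
Qed.

Lemma wt_ES (S : {set T}) : S \subset W ->
  \sum_f wt f * ([forall x in S, ~~ f x])%:R = (1 - p) ^+ #|S|.
Proof.
move=> SW.
have := distr_ind qW (fun v b => (v \in S) ==> ~~ b).
move=> ->; rewrite (bigID (mem S)) /= [X in _ * X]big1 ?mulr1.
  rewrite -prodr_const; apply: eq_bigr => v vS.
  by rewrite vS /qW (subsetP SW v vS) mulr0 mulr1 add0r.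
by move=> v /negbTE ->; rewrite !mulr1 qW_sum.
Qed.

Lemma avg (F : {ffun T -> bool} -> nat) (G : {ffun T -> bool} -> R) :
  0 <= p <= 1 -> (forall f, (F f)%:R <= G f) ->
  exists f, (F f)%:R <= \sum_f wt f * G f.
Proof.
move=> hp hFG.
pose f0 : {ffun T -> bool} := [ffun=> false].
case: (arg_minnP F (erefl true : (fun _ => true) f0)) => fm _ fmin.
exists fm.
apply: le_trans (_ : \sum_f wt f * (F fm)%:R <= _).
  by rewrite -mulr_suml wt_sum mul1r.
apply: ler_sum => f _; apply: ler_wpM2l; first exact: wt_ge0.
apply: le_trans (hFG f); rewrite ler_nat; exact: fmin.
Qed.
End Avg.

Definition Uset (T : finType) (e : rel T) (Rs X : {set T}) : {set T} :=
  [set v | (v \notin Rs :|: X) && ~~ [exists x in Rs :|: X, e x v]].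
Definition Bset (T : finType) (e : rel T) (Rs : {set T}) : {set T} :=
  [set v | (v \notin Rs) && [forall x, e v x ==> (x \notin Rs)]].
Definition Nc (T : finType) (e : rel T) (v : T) : {set T} := v |: [set x | e v x].

Lemma card_sumR (T : finType) (A : {set T}) :
  (#|A|%:R : R) = \sum_v ((v \in A) : nat)%:R.
Proof.
rewrite -sum1_card natr_sum big_mkcond /=; apply: eq_bigr => v _.
by case: (v \in A).
Qed.

Lemma card_sumR_in (T : finType) (A : {set T}) (P : pred T) :
  (#|[set v in A | P v]|%:R : R) = \sum_(v in A) ((P v) : nat)%:R.
Proof.
rewrite card_sumR [RHS]big_mkcond /=; apply: eq_bigr => v _.
by rewrite inE; case: (v \in A); case: (P v).
Qed.

Lemma avg_bound (T : finType) (e : rel T) (Rs : {set T}) (p : R) :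
  0 <= p <= 1 -> symmetric e ->
  exists X : {set T},
  (#|X| + #|Uset e Rs X|)%:R <= #|~: Rs|%:R * p
     + \sum_(v in Bset e Rs) (1 - p) ^+ #|Nc e v|.
Proof.
move=> hp esym.
pose Xf (f : {ffun T -> bool}) := [set v | f v].
pose F f := (#|Xf f| + #|Uset e Rs (Xf f)|)%N.
pose G (f : {ffun T -> bool}) : R := \sum_v ((f v) : nat)%:R
   + \sum_(v in Bset e Rs) (([forall x in Nc e v, ~~ f x]) : nat)%:R.
have hFG : forall f, (F f)%:R <= G f.
  move=> f; rewrite /F /G natrD; apply: lerD.
    by rewrite card_sumR (eq_bigr (fun v => ((f v):nat)%:R)) // => v _; rewrite inE.
  rewrite -card_sumR_in ler_nat; apply: subset_leq_card; apply/subsetP => v.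
  rewrite !inE negb_or => /andP [/andP [vR vX] /existsPn H].
  rewrite vR /= -[X in X && _]andbT; apply/andP; split.
    apply/andP; split => //; apply/forallP => x; apply/implyP => evx.
    by have := H x; rewrite esym evx andbT inE negb_or => /andP [].
  apply/forallP => x; apply/implyP; rewrite !inE => /orP [/eqP ->|evx].
    by [].
  by have := H x; rewrite esym evx andbT !inE negb_or => /andP [].
have [f Hf] := avg (~: Rs) hp hFG.
exists (Xf f); apply: le_trans Hf _; rewrite le_eqVlt; apply/orP; left; apply/eqP.
rewrite /G (eq_bigr (fun f => wt (~: Rs) p f * \sum_v ((f v) : nat)%:R
   + wt (~: Rs) p f * \sum_(v in Bset e Rs) (([forall x in Nc e v, ~~ f x]) : nat)%:R)); last by move=> f' _; rewrite mulrDr.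
rewrite big_split /=; congr (_ + _).
  rewrite (eq_bigr (fun f => \sum_v wt (~: Rs) p f * ((f v) : nat)%:R)); last by move=> f' _; rewrite mulr_sumr.
  rewrite exchange_big /= (eq_bigr (fun v => (v \in ~: Rs)%:R * p)); last by move=> v _; rewrite wt_E1.
  by rewrite -mulr_suml card_sumR.
rewrite (eq_bigr (fun f => \sum_(v in Bset e Rs) wt (~: Rs) p f * (([forall x in Nc e v, ~~ f x]) : nat)%:R)); last by move=> f' _; rewrite mulr_sumr.
rewrite exchange_big /=; apply: eq_bigr => v vB; rewrite wt_ES //.
apply/subsetP => x; move: vB; rewrite !inE => /andP [vR /forallP H] /orP [/eqP ->|evx] //.
by have := H x; rewrite evx.
Qed.

End RingPart.

Section RealPart.
Local Open Scope R_scope.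
Lemma pow_le1 (x : R) (n : nat) : 0 <= x <= 1 -> x ^ n <= 1.
Proof.
move=> hx; induction n as [|n IH]; simpl; [lra|].
have h0 : 0 <= x ^ n by apply pow_le; lra.
nra.
Qed.

Lemma anal (d k : nat) : (1 <= d)%nat -> (d + 1 <= k)%nat ->
  0 < ln (INR d + 1) / (INR d + 1) <= 1 /\
  (1 - ln (INR d + 1) / (INR d + 1)) ^ k <= / (INR d + 1).
Proof.
move=> hd hk.
set m := INR d + 1.
have hm1 : 1 < m.
  have : 1 <= INR d by apply: (le_INR 1 d); lia.
  rewrite /m; lra.
have hm0 : 0 < m by lra.
have hl0 : 0 < ln m by rewrite -ln_1; apply ln_increasing; lra.
have hlm : ln m < m.
  have := exp_ineq1_le (ln m); rewrite exp_ln //; lra.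
set p := ln m / m.
have hp0 : 0 < p by apply Rdiv_lt_0_compat.
have hp1 : p <= 1.
  rewrite /p; apply (Rmult_le_reg_r m) => //.
  rewrite /Rdiv Rmult_assoc Rinv_l; lra.
split; [lra|].
have e1 : 1 - p <= exp (- p) by have := exp_ineq1_le (- p); lra.
have hexp : exp (- p) ^ (d + 1) = / m.
  have hpos : 0 < exp (- p) ^ (d + 1) by apply pow_lt, exp_pos.
  rewrite -(exp_ln _ hpos) ln_pow; last by apply exp_pos.
  rewrite ln_exp plus_INR /= -/m.
  have -> : m * - p = - ln m by rewrite /p; field; lra.
  rewrite exp_Ropp exp_ln //.
have -> : k = ((d + 1) + (k - (d + 1)))%nat by lia.
rewrite pow_add.
have h1 : (1 - p) ^ (d + 1) <= / m.
  rewrite -hexp; apply pow_incr; lra.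
have h2 : (1 - p) ^ (k - (d + 1)) <= 1 by apply pow_le1; lra.
have h3 : 0 <= (1 - p) ^ (k - (d + 1)) by apply pow_le; lra.
have h4 : 0 <= (1 - p) ^ (d + 1) by apply pow_le; lra.
have h5 : 0 < / m by apply Rinv_0_lt_compat.
nra.
Qed.

End RealPart.

Lemma bigmin_leq (I : eqType) (r : seq I) (P : pred I) (F : I -> nat) x0 i :
  i \in r -> P i -> \big[minn/x0]_(j <- r | P j) F j <= F i.
Proof.
elim: r => [//|a r IH]; rewrite inE big_cons => /orP [/eqP <- ->|ir Pi].
  exact: geq_minl.
case: (P a); last exact: IH.
by rewrite geq_min IH ?orbT.
Qed.

Section Inst.
Local Open Scope ring_scope.

Lemma final_bound (T : finType) (e : rel T) (R : {set T}) (u : T) (delta : nat) :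
  symmetric e -> irreflexive e -> (forall v, (delta <= degree e v)%nat) ->
  (1 <= delta)%nat -> u \in R -> (forall r, r \in R -> ~~ e u r) ->
  exists X : {set T},
   Rle (INR (#|X| + #|Uset e R X|))
     (Rplus (Rmult (INR #|~: R|) (Rdiv (ln (Rplus (INR delta) (IZR 1%Z))) (Rplus (INR delta) (IZR 1%Z))))
            (Rmult (INR (#|~: R| - delta)) (Rinv (Rplus (INR delta) (IZR 1%Z))))).
Proof.
move=> esym eirr hmin d1 uR hnu.
set m := Rplus (INR delta) (IZR 1%Z).
have [[hp0 hp1] _] := anal d1 (leqnn (delta + 1)).
set p := Rdiv (ln m) m.
have hp : 0 <= p <= 1 by apply/andP; split; apply/RleP; [exact: Rlt_le hp0 | exact: hp1].
have [X hX] := avg_bound R hp esym.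
exists X; apply/RleP; rewrite !RplusE !RmultE !RinvE !INRE.
apply: (le_trans hX).
rewrite lerD2l.
have hm0 : 0 <= m^-1.
  rewrite invr_ge0; apply/RleP; rewrite /m.
  by apply: Rplus_le_le_0_compat; [exact: pos_INR | exact: Rle_0_1].
apply: (le_trans (y := \sum_(v in Bset e R) m^-1)).
  apply: ler_sum => v vB.
  have hk : (delta + 1 <= #|Nc e v|)%nat.
    rewrite /Nc cardsU1 inE eirr /= add1n addn1 ltnS; exact: hmin.
  have [_ hb] := anal d1 hk.
  by rewrite -RpowE -RinvE; apply/RleP; exact: hb.
rewrite sumr_const; apply: (le_trans (y := #|Bset e R|%:R * m^-1)); first by rewrite mulr_natl. apply: ler_wpM2r => //; rewrite ler_nat.
have BN : Bset e R :&: [set x | e u x] = set0.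
  apply/setP => x; rewrite !inE; apply/negP => /andP [/andP [_ /forallP H] eux].
  by have := H u; rewrite esym eux uR.
have sub : Bset e R :|: [set x | e u x] \subset ~: R.
  apply/subsetP => x; rewrite !inE => /orP [/andP [xR _] // | eux].
  by apply/negP => xR; have := hnu x xR; rewrite eux.
have := subset_leq_card sub; rewrite cardsU BN cards0 subn0 => h.
have := hmin u; rewrite /degree => h2.
lia.
Qed.
End Inst.

Delimit Scope R_scope with R.

Theorem mainTheorem5 (T : finType) (e : rel T) (c : nat) (col : T -> 'I_c)
  (delta : nat)
  (Hsimple : simple_graph e) (Hconn : graph_connected e)
  (Hcol : colouring_onto col) (Hdelta : is_min_degree e delta) :
  gamma_t e col = c \/
  (INR (gamma_t e col) <
     (1 + ln (INR delta + 1)) / (INR delta + 1) * (INR #|T| - INR c + 1)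
     + INR c - 1)%R.
Proof.
case: Hsimple => esym eirr.
case: Hdelta => [[v0 hv0] hmin].
have exP : forall i : 'I_c, exists v, col v == i.
  by move=> i; case: (Hcol i) => v <-; exists v.
pose rep i := xchoose (exP i).
have hrep : forall i, col (rep i) = i by move=> i; apply/eqP; exact: (xchooseP (exP i)).
have trop_ge : forall D : {set T}, tropical col D -> c <= #|D|.
  move=> D /forallP hD.
  have : [set: 'I_c] \subset col @: D.
    apply/subsetP => i _; case/existsP: (hD i) => v /andP [vD /eqP <-].
    exact: imset_f.
  move/subset_leq_card; rewrite cardsT card_ord => h.
  by apply: leq_trans h _; apply: leq_imset_card.
have hcT : c <= #|T|.
  rewrite -cardsT; apply: trop_ge; apply/forallP => i; apply/existsP.
  by exists (rep i); rewrite inE hrep eqxx.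
have g_ge : c <= gamma_t e col.
  rewrite /gamma_t; elim/big_ind: _ => //.
    by move=> x y hx hy; rewrite leq_min hx hy.
  by move=> D /andP [_ hD]; exact: trop_ge.
have g_le : forall D, trop_dom e col D -> gamma_t e col <= #|D|.
  by move=> D hD; rewrite /gamma_t; apply: bigmin_leq => //; rewrite mem_index_enum.
pose R0 := [set rep i | i : 'I_c].
case: (boolP (dominating e R0)) => hdom.
  left; apply/eqP; rewrite eqn_leq g_ge andbT.
  apply: leq_trans (g_le R0 _) _.
    rewrite /trop_dom hdom /=; apply/forallP => i; apply/existsP; exists (rep i).
    by rewrite hrep eqxx andbT; apply/imsetP; exists i.
  by rewrite (leq_trans (leq_imset_card _ _)) // card_ord.
right.
case/forallPn: hdom => u; rewrite negb_or => /andP [uR0 /existsPn hu].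
pose rep' i := if i == col u then u else rep i.
have hrep' : forall i, col (rep' i) = i.
  by move=> i; rewrite /rep'; case: eqP => [->|].
pose R := [set rep' i | i : 'I_c].
have cardR : #|R| = c.
  by rewrite card_imset ?card_ord //; apply: (can_inj hrep').
have uR : u \in R by apply/imsetP; exists (col u) => //; rewrite /rep' eqxx.
have hnu : forall r, r \in R -> ~~ e u r.
  move=> r /imsetP [i _ ->]; rewrite /rep'; case: eqP => _; first by rewrite eirr.
  rewrite esym; have := hu (rep i); rewrite negb_and => /orP [|//].
  by have -> : rep i \in R0 by apply/imsetP; exists i.
have d1 : (1 <= delta)%N.
  rewrite lt0n; apply/eqP => d0.
  have iso : forall y, ~~ e v0 y.
    move: hv0; rewrite d0 /degree => /eqP; rewrite cards_eq0 => /eqP E y.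
    apply/negP => hy; have : y \in [set y | e v0 y] by rewrite inE.
    by rewrite E inE.
  have allv0 : forall x, x = v0.
    move=> x; case/connectP: (Hconn v0 x) => [[|y s]] /=; first by move=> _ ->.
    by case/andP => h; rewrite (negbTE (iso y)) in h.
  have h : rep (col u) \in R0 by apply/imsetP; exists (col u).
  by rewrite (allv0 (rep (col u))) -(allv0 u) (negbTE uR0) in h.
have [X hX] := final_bound esym eirr hmin d1 uR hnu.
set U := Uset e R X.
pose D := R :|: X :|: U.
have hD : trop_dom e col D.
  apply/andP; split.
    apply/forallP => v; rewrite /D.
    case vRX: (v \in R :|: X).
      by apply/orP; left; rewrite !inE; rewrite inE in vRX; case/orP: vRX => ->; rewrite ?orbT.
    case ex: [exists x in R :|: X, e x v].
      case/existsP: ex => x /andP [xRX exv]; apply/orP; right; apply/existsP; exists x.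
      by rewrite exv andbT !inE; rewrite inE in xRX; case/orP: xRX => ->; rewrite ?orbT.
    by apply/orP; left; rewrite !inE; apply/orP; right; rewrite ex andbT; rewrite inE in vRX; rewrite vRX.
  apply/forallP => i; apply/existsP; exists (rep' i); rewrite hrep' eqxx andbT.
  by rewrite /D !inE; apply/orP; left; apply/orP; left; apply/imsetP; exists i.
have cD : #|D| <= c + (#|X| + #|U|).
  rewrite /D addnA -cardR; apply: leq_trans (leq_add (_ : #|R :|: X| <= #|R| + #|X|) (leqnn #|U|)).
    by rewrite cardsU leq_subr.
  by rewrite cardsU leq_subr.
have cW : c + #|~: R| = #|T| by rewrite -cardR cardsC.
have dW : delta <= #|~: R|.
  apply: leq_trans (hmin u) _; apply: subset_leq_card; apply/subsetP => x.
  by rewrite !inE => eux; apply/negP => xR; have := hnu x xR; rewrite eux.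
have hg := leq_trans (g_le D hD) cD.
have [[hp0 _] _] := anal d1 (leqnn (delta + 1)).
move: hX; rewrite minus_INR; last by apply/ssrnat.leP.
have -> : INR #|T| = (INR #|~: R| + INR c)%R by rewrite -cW plus_INR; ring.
have hgR : (INR (gamma_t e col) <= INR c + INR (#|X| + #|U|))%R.
  by rewrite -plus_INR; apply: le_INR; apply/ssrnat.leP.
move: hgR hp0.
set L := ln (INR delta + 1).
set Wr := INR #|~: R|.
set a := INR (gamma_t e col).
set s := INR (#|X| + #|U|).
have hm : (INR delta + 1 <> 0)%R by have := pos_INR delta; lra.
have id : ((1 + L) / (INR delta + 1) * (Wr + INR c - INR c + 1) + INR c - 1
   - (INR c + (Wr * (L / (INR delta + 1)) + (Wr - INR delta) * / (INR delta + 1)))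
   = L / (INR delta + 1))%R by field.
move=> h1 h2 h3; lra.
Qed.
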